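(* Every universal distance matrix is weakly universal. There exist weakly universal distance matrices which are not universal.
   Context: $\mathcal R$ is the set of infinite real matrices $r=\{r_{i,j}\}_{i,j\ge1}$ with $r_{i,i}=0$, $r_{i,j}\ge0$, $r_{i,j}=r_{j,i}$, $r_{i,k}+r_{k,j}\ge r_{i,j}$; $\mathcal R_n$ is the analogous set of $n\times n$ matrices (with the usual topology of $\mathbb R^{n^2}$), and $p_n(r)$ is the upper-left $n\times n$ corner. $r$ is proper if $r_{i,j}>0$ for $i\neq j$. For $q\in\mathcal R_n$, $A(q)=\{a\in\mathbb R^n:|a_i-a_j|\le q_{i,j}\le a_i+a_j\ \forall i,j\}$. A proper $r\in\mathcal R$ is universal if for every $n$, every $a\in A(p_n(r))$ and every $\epsilon>0$ there is $m\in\mathbb N$ with $\max_{1\le i\le n}|r_{i,m}-a_i|<\epsilon$. A proper $r\in\mathcal R$ is weakly universal if for every $n$ the set of all submatrices $\{r_{i_k,i_s}\}_{k,s=1}^n$, over all $n$-tuples of (distinct) indices $i_1,\dots,i_n\in\mathbb N$, is dense in $\mathcal R_n$. *)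

(* Defs.v *)
(* concrete classical reals R. Indices are 0-based
   (index i here corresponds to index i+1 in the paper). *)
From Stdlib Require Import Reals.
Open Scope R_scope.

Definition mat := nat -> nat -> R.

Definition in_calR (r : mat) : Prop :=
  (forall i, r i i = 0) /\
  (forall i j, 0 <= r i j) /\
  (forall i j, r i j = r j i) /\
  (forall i j k, r i j <= r i k + r k j).

Definition in_calR_n (n : nat) (q : mat) : Prop :=
  (forall i, (i < n)%nat -> q i i = 0) /\
  (forall i j, (i < n)%nat -> (j < n)%nat -> 0 <= q i j) /\
  (forall i j, (i < n)%nat -> (j < n)%nat -> q i j = q j i) /\
  (forall i j k, (i < n)%nat -> (j < n)%nat -> (k < n)%nat ->
     q i j <= q i k + q k j).

Definition proper (r : mat) : Prop := forall i j, i <> j -> 0 < r i j.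

Definition in_A (n : nat) (r : mat) (a : nat -> R) : Prop :=
  forall i j, (i < n)%nat -> (j < n)%nat ->
    Rabs (a i - a j) <= r i j /\ r i j <= a i + a j.

Definition universal (r : mat) : Prop :=
  in_calR r /\ proper r /\
  forall (n : nat) (a : nat -> R), in_A n r a ->
  forall eps, 0 < eps ->
  exists m : nat, forall i, (i < n)%nat -> Rabs (r i m - a i) < eps.

(* Density, in \mathcal R_n with the topology of R^{n^2}, of the set of
   submatrices {r_{i_k,i_s}}_{k,s<n} over tuples of distinct indices. *)
Definition weakly_universal (r : mat) : Prop :=
  in_calR r /\ proper r /\
  forall (n : nat) (q : mat), in_calR_n n q ->
  forall eps, 0 < eps ->
  exists idx : nat -> nat,
    (forall k s, (k < n)%nat -> (s < n)%nat -> idx k = idx s -> k = s) /\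
    (forall k s, (k < n)%nat -> (s < n)%nat ->
       Rabs (r (idx k) (idx s) - q k s) < eps).

(* Main.v *)
Require Import Defs.
From Stdlib Require Import Reals Lra Lia Arith List ZArith.
From Stdlib Require Cantor.
From Stdlib Require Import ClassicalDescription.
From mathcomp Require ssreflect eqtype ssrnat seq choice.
Open Scope R_scope.

Fixpoint mn (g : nat -> R) (k : nat) : R :=
  match k with 0 => g 0%nat | S k' => Rmin (mn g k') (g (S k')) end.

Lemma mn_le g k j : (j <= k)%nat -> mn g k <= g j.
Proof.
  induction k; intros H; simpl.
  - assert (j = 0%nat) by lia; subst; lra.
  - destruct (Nat.eq_dec j (S k)) as [->|Hn].
    + apply Rmin_r.
    + eapply Rle_trans; [apply Rmin_l|]. apply IHk; lia.
Qed.

Lemma mn_ex g k : exists j, (j <= k)%nat /\ mn g k = g j.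
Proof.
  induction k; simpl.
  - exists 0%nat; split; auto.
  - destruct IHk as [j [Hj E]]. unfold Rmin; destruct (Rle_dec (mn g k) (g (S k))).
    + exists j; split; [lia|auto].
    + exists (S k); split; auto.
Qed.

Fixpoint mxn (g : nat -> nat) (k : nat) : nat :=
  match k with 0 => g 0%nat | S k' => Nat.max (mxn g k') (g (S k')) end.

Lemma mxn_ge g k j : (j <= k)%nat -> (g j <= mxn g k)%nat.
Proof.
  induction k; intros H; simpl.
  - assert (j = 0%nat) by lia; subst; lia.
  - destruct (Nat.eq_dec j (S k)) as [->|Hn]. lia. specialize (IHk ltac:(lia)). lia.
Qed.

Lemma embed (r : mat) (Hr : in_calR r)
  (U : forall (n : nat) (a : nat -> R), in_A n r a ->
       forall eps, 0 < eps -> exists m : nat, forall i, (i < n)%nat -> Rabs (r i m - a i) < eps)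
  (n : nat) (q : mat)
  (Qd : forall i, (i < n)%nat -> q i i = 0)
  (Qs : forall i j, (i < n)%nat -> (j < n)%nat -> q i j = q j i)
  (Qt : forall i j k, (i < n)%nat -> (j < n)%nat -> (k < n)%nat -> q i j <= q i k + q k j) :
  forall k, (k < n)%nat -> forall eta, 0 < eta -> exists idx : nat -> nat,
    forall a b, (a <= k)%nat -> (b <= k)%nat -> Rabs (r (idx a) (idx b) - q a b) < eta.
Proof.
  destruct Hr as [Rd [Rn [Rs Rt]]].
  induction k; intros Hk eta Heta.
  - exists (fun _ => 0%nat). intros a b Ha Hb.
    assert (a = 0%nat) by lia; assert (b = 0%nat) by lia; subst.
    rewrite Rd, Qd by lia. rewrite Rminus_0_r, Rabs_R0; auto.
  - set (e0 := eta / 4).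
    assert (He0 : 0 < e0) by (unfold e0; lra).
    destruct (IHk ltac:(lia) e0 He0) as [idx Hidx].
    set (d := fun j => q j (S k)).
    set (g := fun i j => d j + r i (idx j)).
    set (A := fun i => mn (g i) k + e0).
    set (N := S (mxn idx k)).
    assert (HA : in_A N r A).
    { intros i j _ _. split.
      - apply Rabs_le. unfold A.
        destruct (mn_ex (g i) k) as [u [Hu Eu]].
        destruct (mn_ex (g j) k) as [v [Hv Ev]].
        pose proof (mn_le (g i) k v Hv). pose proof (mn_le (g j) k u Hu).
        unfold g in *. pose proof (Rt i (idx v) j). pose proof (Rt j (idx u) i).
        rewrite (Rs j i) in *. lra.
      - unfold A.
        destruct (mn_ex (g i) k) as [u [Hu Eu]].
        destruct (mn_ex (g j) k) as [v [Hv Ev]].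
        rewrite Eu, Ev. unfold g, d.
        pose proof (Rt i j (idx u)). pose proof (Rt (idx u) j (idx v)).
        pose proof (Hidx u v Hu Hv) as H1. apply Rabs_def2 in H1.
        pose proof (Qt u v (S k) ltac:(lia) ltac:(lia) ltac:(lia)).
        rewrite (Qs (S k) v) in * by lia. pose proof (Rs (idx v) j). lra. }
    destruct (U N A HA e0 He0) as [m Hm].
    exists (fun j => if Nat.leb j k then idx j else m).
    assert (Key : forall a, (a <= k)%nat -> Rabs (r (idx a) m - q a (S k)) < eta).
    { intros a Ha.
      assert (Hia : (idx a < N)%nat) by (unfold N; pose proof (mxn_ge idx k a Ha); lia).
      pose proof (Hm _ Hia) as H1. apply Rabs_def2 in H1.
      pose proof (mn_le (g (idx a)) k a Ha) as H2.
      destruct (mn_ex (g (idx a)) k) as [u [Hu Eu]].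
      unfold A in H1. set (M := mn (g (idx a)) k) in *.
      assert (H2' : M <= q a (S k)) by (unfold g, d in H2; rewrite Rd in H2; lra).
      assert (Eu' : M = q u (S k) + r (idx a) (idx u)) by (rewrite Eu; reflexivity).
      pose proof (Hidx a u Ha Hu) as H3. apply Rabs_def2 in H3.
      pose proof (Qt a (S k) u ltac:(lia) ltac:(lia) ltac:(lia)).
      pose proof (Qt a u (S k) ltac:(lia) ltac:(lia) ltac:(lia)).
      unfold e0 in *. apply Rabs_def1; lra. }
    intros a b Ha Hb.
    destruct (Nat.leb a k) eqn:Ea; destruct (Nat.leb b k) eqn:Eb.
    + apply Nat.leb_le in Ea; apply Nat.leb_le in Eb.
      pose proof (Hidx a b Ea Eb). unfold e0 in *. lra.
    + apply Nat.leb_le in Ea; apply Nat.leb_gt in Eb. assert (b = S k) by lia; subst b.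
      apply Key; auto.
    + apply Nat.leb_gt in Ea; apply Nat.leb_le in Eb. assert (a = S k) by lia; subst a.
      rewrite Rs, (Qs (S k) b) by lia. apply Key; auto.
    + apply Nat.leb_gt in Ea; apply Nat.leb_gt in Eb.
      assert (a = S k) by lia; assert (b = S k) by lia; subst.
      rewrite Rd, Qd by lia. rewrite Rminus_0_r, Rabs_R0; auto.
Qed.

Lemma part1 (r : mat) : universal r -> weakly_universal r.
Proof.
  intros [Hr [Hp U]]. split; [exact Hr|]. split; [exact Hp|].
  intros n q [Qd [Qn [Qs Qt]]] eps Heps.
  destruct n as [|n'].
  { exists (fun k => k). split; intros; lia. }
  set (dl := eps / 2).
  set (q' := fun k s => q k s + (if Nat.eq_dec k s then 0 else dl)).
  assert (Q'd : forall i, (i < S n')%nat -> q' i i = 0).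
  { intros i Hi; unfold q'; destruct (Nat.eq_dec i i); [rewrite Qd by auto; lra|congruence]. }
  assert (Q's : forall i j, (i < S n')%nat -> (j < S n')%nat -> q' i j = q' j i).
  { intros i j Hi Hj; unfold q'; rewrite Qs by auto.
    destruct (Nat.eq_dec i j); destruct (Nat.eq_dec j i); try lra; congruence. }
  assert (Q't : forall i j k, (i < S n')%nat -> (j < S n')%nat -> (k < S n')%nat ->
            q' i j <= q' i k + q' k j).
  { intros i j k Hi Hj Hk; unfold q'.
    pose proof (Qt i j k Hi Hj Hk). pose proof (Qn i k Hi Hk). pose proof (Qn k j Hk Hj).
    pose proof (Qn i j Hi Hj). assert (0 < dl) by (unfold dl; lra).
    destruct (Nat.eq_dec i j); destruct (Nat.eq_dec i k); destruct (Nat.eq_dec k j);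
      subst; try lra; try congruence.
    all: rewrite Qd in * by auto; lra. }
  destruct (embed r Hr U (S n') q' Q'd Q's Q't n' ltac:(lia) dl ltac:(unfold dl; lra))
    as [idx Hidx].
  exists idx. split.
  - intros k s Hk Hs E. destruct (Nat.eq_dec k s) as [|Hne]; auto. exfalso.
    pose proof (Hidx k s ltac:(lia) ltac:(lia)) as H. rewrite E, (proj1 Hr) in H.
    apply Rabs_def2 in H. unfold q' in H. destruct (Nat.eq_dec k s); [congruence|].
    pose proof (Qn k s Hk Hs). unfold dl in *; lra.
  - intros k s Hk Hs. pose proof (Hidx k s ltac:(lia) ltac:(lia)) as H.
    apply Rabs_def2 in H. unfold q' in H. apply Rabs_def1;
    destruct (Nat.eq_dec k s); unfold dl in *; lra.
Qed.

Definition T := (nat * nat * nat * list (list nat))%type.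
Module Enc.
Import ssreflect eqtype ssrnat seq choice.
Definition dec (c : nat) : T :=
  match @unpickle _ c : option T with Some x => x | None => (0,0,0,nil)%nat end.
Definition enc (x : T) : nat := pickle x.
Lemma decK (x : T) : dec (enc x) = x.
Proof. rewrite /dec /enc pickleK. reflexivity. Qed.
End Enc.

Definition xn (x : T) := fst (fst (fst x)).
Definition xK (x : T) := snd (fst (fst x)).
Definition xD (x : T) := snd (fst x).
Definition fm (x : T) (p p' : nat) : nat := nth p' (nth p (snd x) nil) 0%nat.

Definition valid (x : T) : Prop :=
  (forall p p', (p < xn x)%nat -> (p' < xn x)%nat -> fm x p p' = fm x p' p) /\
  (forall p p', (p < xn x)%nat -> (p' < xn x)%nat -> p <> p' ->
      (1 <= fm x p p' /\ fm x p p' <= xD x)%nat) /\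
  (forall p p' p'', (p < xn x)%nat -> (p' < xn x)%nat -> (p'' < xn x)%nat ->
      p <> p' -> p <> p'' -> p' <> p'' -> (fm x p p' <= fm x p p'' + fm x p'' p')%nat).

Definition ext (w : mat) (n : nat) (B : R) : mat := fun p p' =>
  if Nat.eq_dec p p' then 0 else if andb (Nat.ltb p n) (Nat.ltb p' n) then w p p' else B + 1.

Ltac ltbs := repeat match goal with
  | H : Nat.ltb _ _ = true |- _ => apply Nat.ltb_lt in H
  | H : Nat.ltb _ _ = false |- _ => apply Nat.ltb_ge in H end.

Ltac spec := repeat match goal with
  | H : ?a -> ?b -> ?c -> _, Ha : ?a, Hb : ?b, Hc : ?c |- _ => specialize (H Ha Hb Hc)
  | H : ?a -> ?b -> _, Ha : ?a, Hb : ?b |- _ => specialize (H Ha Hb) end.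

Lemma ext_ok (w : mat) (n : nat) (B : R) (HB : 0 <= B)
  (Hpos : forall p p', (p < n)%nat -> (p' < n)%nat -> p <> p' -> 0 < w p p' /\ w p p' <= B)
  (Hsym : forall p p', (p < n)%nat -> (p' < n)%nat -> w p p' = w p' p)
  (Htri : forall p p' p'', (p < n)%nat -> (p' < n)%nat -> (p'' < n)%nat ->
      p <> p' -> p <> p'' -> p' <> p'' -> w p p' <= w p p'' + w p'' p') :
  in_calR (ext w n B) /\ proper (ext w n B) /\ (forall p p', ext w n B p p' <= B + 1).
Proof.
  assert (Hb : forall p p', 0 <= ext w n B p p' /\ ext w n B p p' <= B + 1 /\
                 (p <> p' -> 0 < ext w n B p p')).
  { intros p p'. unfold ext. destruct (Nat.eq_dec p p').
    - split; [lra|split; [lra|tauto]].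
    - destruct (Nat.ltb p n) eqn:E1; destruct (Nat.ltb p' n) eqn:E2; simpl; ltbs;
        try (split; [lra|split; [lra|intros; lra]]).
      destruct (Hpos p p' E1 E2 n0). split; [lra|split; [lra|intros; lra]]. }
  split; [|split].
  - split; [|split; [|split]].
    + intros i; unfold ext; destruct (Nat.eq_dec i i); congruence.
    + intros; apply Hb.
    + intros i j. unfold ext. destruct (Nat.eq_dec i j); destruct (Nat.eq_dec j i);
        try congruence.
      destruct (Nat.ltb i n) eqn:E1; destruct (Nat.ltb j n) eqn:E2; simpl; ltbs; auto.
    + intros p p' p''.
      destruct (Nat.eq_dec p p') as [E|H1].
      { subst p'. unfold ext at 1. destruct (Nat.eq_dec p p); [|congruence].
        pose proof (Hb p p''); pose proof (Hb p'' p); lra. }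
      destruct (Nat.eq_dec p p'') as [E|H2].
      { subst p''. unfold ext at 2. destruct (Nat.eq_dec p p); [|congruence]. lra. }
      destruct (Nat.eq_dec p' p'') as [E|H3].
      { subst p''. unfold ext at 3. destruct (Nat.eq_dec p' p'); [|congruence]. lra. }
      pose proof (Hb p p'); pose proof (Hb p p''); pose proof (Hb p'' p').
      unfold ext in *.
      destruct (Nat.eq_dec p p'); [congruence|].
      destruct (Nat.eq_dec p p''); [congruence|].
      destruct (Nat.eq_dec p'' p'); [congruence|].
      destruct (Nat.ltb p n) eqn:E1; destruct (Nat.ltb p' n) eqn:E2;
        destruct (Nat.ltb p'' n) eqn:E3; simpl in *; ltbs; try lra.
      * apply Htri; auto.
  - intros i j Hij. apply Hb; auto.
  - intros; apply Hb.
Qed.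

Definition glue (W : nat -> mat) (Dm : nat -> R) : mat := fun i j =>
  if Nat.eq_dec (fst (Cantor.of_nat i)) (fst (Cantor.of_nat j))
  then W (fst (Cantor.of_nat i)) (snd (Cantor.of_nat i)) (snd (Cantor.of_nat j))
  else Rmax (Dm (fst (Cantor.of_nat i))) (Dm (fst (Cantor.of_nat j))).

Lemma glue_ok W Dm
  (HW : forall b, in_calR (W b) /\ proper (W b) /\ forall p p', W b p p' <= Dm b)
  (HD : forall b, 0 < Dm b) :
  in_calR (glue W Dm) /\ proper (glue W Dm).
Proof.
  assert (Mx : forall a b, a <= Rmax a b /\ b <= Rmax a b /\ Rmax a b = Rmax b a).
  { intros a b; unfold Rmax; destruct (Rle_dec a b); destruct (Rle_dec b a); lra. }
  split; [split; [|split; [|split]]|].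
  - intros i; unfold glue. destruct (Nat.eq_dec _ _); [|congruence]. apply HW.
  - intros i j; unfold glue. destruct (Nat.eq_dec _ _).
    + apply HW.
    + pose proof (HD (fst (Cantor.of_nat i))); pose proof (Mx (Dm (fst (Cantor.of_nat i))) (Dm (fst (Cantor.of_nat j)))); lra.
  - intros i j; unfold glue.
    destruct (Cantor.of_nat i) as [b1 p1]; destruct (Cantor.of_nat j) as [b2 p2]; simpl.
    destruct (Nat.eq_dec b1 b2); destruct (Nat.eq_dec b2 b1); try congruence.
    + subst. apply HW.
    + apply Mx.
  - intros i j k; unfold glue.
    destruct (Cantor.of_nat i) as [b1 p1]; destruct (Cantor.of_nat j) as [b2 p2];
    destruct (Cantor.of_nat k) as [b3 p3]; simpl.
    pose proof (HD b1); pose proof (HD b2); pose proof (HD b3).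
    destruct (HW b1) as [[_ [Hn1 [_ Ht1]]] [_ Hle1]].
    destruct (HW b2) as [[_ [Hn2 _]] _].
    pose proof (Ht1 p1 p2 p3). pose proof (Hle1 p1 p2). pose proof (Hn1 p1 p3).
    pose proof (Hn2 p3 p2).
    pose proof (Mx (Dm b1) (Dm b2)). pose proof (Mx (Dm b1) (Dm b3)).
    pose proof (Mx (Dm b3) (Dm b2)).
    destruct (Nat.eq_dec b1 b2); destruct (Nat.eq_dec b1 b3); destruct (Nat.eq_dec b3 b2);
      subst; try congruence; try lra.
    unfold Rmax; repeat destruct (Rle_dec _ _); lra.
  - intros i j Hij. unfold glue.
    destruct (Cantor.of_nat i) as [b1 p1] eqn:E1; destruct (Cantor.of_nat j) as [b2 p2] eqn:E2;
      simpl.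
    destruct (Nat.eq_dec b1 b2).
    + subst. destruct (Nat.eq_dec p1 p2).
      * subst. exfalso. apply Hij. rewrite <- (Cantor.cancel_to_of i), <- (Cantor.cancel_to_of j).
        rewrite E1, E2; reflexivity.
      * apply HW; auto.
    + pose proof (HD b1); pose proof (Mx (Dm b1) (Dm b2)); lra.
Qed.

Definition wfun (x : T) : mat := fun p p' => INR (fm x p p') / INR (S (xK x)).

Definition blk (b : nat) : mat * nat * R :=
  let x := Enc.dec b in
  if excluded_middle_informative (valid x) then (wfun x, xn x, INR (xD x))
  else ((fun _ _ => 0), 0%nat, 0).

Definition Wb (b : nat) : mat := ext (fst (fst (blk b))) (snd (fst (blk b))) (snd (blk b)).
Definition Db (b : nat) : R := snd (blk b) + 1.

Lemma Wb_ok b : in_calR (Wb b) /\ proper (Wb b) /\ forall p p', Wb b p p' <= Db b.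
Proof.
  unfold Wb, Db, blk. destruct (excluded_middle_informative _) as [Hv|Hv]; simpl.
  - set (x := Enc.dec b) in *. destruct Hv as [Vs [Vp Vt]].
    assert (Hc : 1 <= INR (S (xK x))) by (rewrite S_INR; pose proof (pos_INR (xK x)); lra).
    assert (Hdiv : forall a c, 1 <= c -> 0 <= a -> a / c <= a).
    { intros a c H1 H2. unfold Rdiv. assert (0 < / c <= 1).
      { split. apply Rinv_0_lt_compat; lra. rewrite <- Rinv_1. apply Rinv_le_contravar; lra. }
      nra. }
    apply ext_ok.
    + apply pos_INR.
    + intros p p' Hp Hp' Hne. destruct (Vp p p' Hp Hp' Hne) as [V1 V2].
      apply le_INR in V1; apply le_INR in V2. unfold wfun. split.
      * unfold Rdiv. apply Rmult_lt_0_compat; [simpl in V1; lra|apply Rinv_0_lt_compat; lra].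
      * eapply Rle_trans; [apply Hdiv; auto; apply pos_INR|auto].
    + intros p p' Hp Hp'. unfold wfun. rewrite Vs; auto.
    + intros p p' p'' H1 H2 H3 H4 H5 H6. unfold wfun.
      pose proof (Vt p p' p'' H1 H2 H3 H4 H5 H6) as V. apply le_INR in V.
      rewrite plus_INR in V. unfold Rdiv. rewrite <- Rmult_plus_distr_r.
      apply Rmult_le_compat_r; [left; apply Rinv_0_lt_compat; lra|auto].
  - apply ext_ok; intros; try lia; lra.
Qed.

Definition rp : mat := glue Wb Db.

Definition pend (r : mat) : mat := fun i j =>
  match i, j with
  | O, O => 0
  | O, S j' => 1 + r O j'
  | S i', O => 1 + r O i'
  | S i', S j' => r i' j'
  end.

Definition rr : mat := pend rp.

Lemma rp_ok : in_calR rp /\ proper rp.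
Proof.
  apply glue_ok. apply Wb_ok. intros b. unfold Db, blk.
  destruct (excluded_middle_informative _); simpl; [pose proof (pos_INR (xD (Enc.dec b)))|]; lra.
Qed.

Lemma pend_ok r : in_calR r -> proper r -> in_calR (pend r) /\ proper (pend r).
Proof.
  intros [Rd [Rn [Rs Rt]]] Hp. split; [split; [|split; [|split]]|].
  - intros [|i]; simpl; auto.
  - intros [|i] [|j]; simpl; try lra; try apply Rn;
      match goal with |- 0 <= 1 + r O ?x => pose proof (Rn O x); lra end.
  - intros [|i] [|j]; simpl; auto.
  - intros [|i] [|j] [|k]; simpl;
      repeat match goal with |- context [r ?a ?b] =>
        lazymatch goal with H : 0 <= r a b |- _ => fail | _ => pose proof (Rn a b) end end;
      try lra;
      first [ apply Rt | (pose proof (Rt O j k); lra)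
            | (pose proof (Rt O i k); pose proof (Rs k i); lra)
            | (pose proof (Rt i j O); pose proof (Rs i O); lra) ].
  - intros [|i] [|j] Hij; simpl; try congruence.
    + pose proof (Rn 0%nat j); lra.
    + pose proof (Rn 0%nat i); lra.
    + apply Hp. congruence.
Qed.

Lemma rr_not_universal : ~ universal rr.
Proof.
  intros [_ [_ U]].
  assert (HA : in_A 1 rr (fun _ => / 2)).
  { intros i j Hi Hj. assert (i = 0%nat) by lia; assert (j = 0%nat) by lia; subst.
    simpl. rewrite Rminus_diag, Rabs_R0. lra. }
  destruct (U 1%nat _ HA (/2) ltac:(lra)) as [m Hm].
  specialize (Hm 0%nat ltac:(lia)). apply Rabs_def2 in Hm.
  destruct m as [|m]; simpl in Hm; [lra|].
  destruct rp_ok as [[_ [Rn _]] _]. pose proof (Rn 0%nat m). lra.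
Qed.

Lemma nth_map_seq {A} (F : nat -> A) n p d : (p < n)%nat -> nth p (map F (seq 0 n)) d = F p.
Proof.
  intros Hp. rewrite nth_indep with (d' := F 0%nat) by (rewrite length_map, length_seq; lia).
  rewrite map_nth, seq_nth by lia. reflexivity.
Qed.

Lemma up_nat (v : R) : 0 < v -> v < INR (Z.to_nat (up v)) /\ INR (Z.to_nat (up v)) <= v + 1.
Proof.
  intros Hv. destruct (archimed v) as [H1 H2].
  assert (H0 : (0 <= up v)%Z) by (apply le_IZR; lra).
  rewrite INR_IZR_INZ, Z2Nat.id by auto. lra.
Qed.

Lemma rp_weak (n : nat) (q : mat) : in_calR_n n q -> forall eps, 0 < eps ->
  exists idx : nat -> nat,
    (forall k s, (k < n)%nat -> (s < n)%nat -> idx k = idx s -> k = s) /\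
    (forall k s, (k < n)%nat -> (s < n)%nat -> Rabs (rp (idx k) (idx s) - q k s) < eps).
Proof.
  intros [Qd [Qn [Qs Qt]]] eps Heps.
  set (dl := eps / 3).
  assert (Hdl : 0 < dl) by (unfold dl; lra).
  destruct (archimed (/ dl)) as [A1 _].
  set (K := Z.to_nat (up (/ dl))).
  set (c := INR (S K)).
  assert (Hc : 1 < dl * c).
  { assert (H0 : (0 <= up (/ dl))%Z).
    { apply le_IZR. pose proof (Rinv_0_lt_compat dl Hdl). lra. }
    assert (INR K = IZR (up (/ dl))) by (unfold K; rewrite INR_IZR_INZ, Z2Nat.id; auto).
    unfold c. rewrite S_INR.
    assert (dl * / dl = 1) by (field; lra). nra. }
  assert (Hc0 : 0 < c) by (unfold c; apply lt_0_INR; lia).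
  set (f := fun p p' => if Nat.eq_dec p p' then 0%nat else Z.to_nat (up ((q p p' + dl) * c))).
  assert (FF : forall p p', (p < n)%nat -> (p' < n)%nat -> p <> p' ->
            (q p p' + dl) * c < INR (f p p') /\ INR (f p p') <= (q p p' + dl) * c + 1).
  { intros p p' Hp Hp' Hne. unfold f. destruct (Nat.eq_dec p p'); [congruence|].
    apply up_nat. pose proof (Qn p p' Hp Hp'). apply Rmult_lt_0_compat; lra. }
  set (D := mxn (fun p => mxn (f p) n) n).
  set (rows := map (fun p => map (fun p' => f p p') (seq 0 n)) (seq 0 n)).
  set (x := (n, K, D, rows) : T).
  assert (Hfm : forall p p', (p < n)%nat -> (p' < n)%nat -> fm x p p' = f p p').
  { intros p p' Hp Hp'. unfold fm; simpl. unfold rows.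
    rewrite nth_map_seq by auto. rewrite nth_map_seq by auto. reflexivity. }
  assert (Hv : valid x).
  { unfold valid; simpl. unfold xn, xD; simpl. split; [|split].
    - intros p p' Hp Hp'. rewrite !Hfm by auto. unfold f.
      destruct (Nat.eq_dec p p'); destruct (Nat.eq_dec p' p); try congruence.
      rewrite Qs by auto. reflexivity.
    - intros p p' Hp Hp' Hne. rewrite Hfm by auto. split.
      + destruct (FF p p' Hp Hp' Hne) as [F1 _]. pose proof (Qn p p' Hp Hp').
        destruct (f p p') eqn:E; [|lia]. simpl in F1.
        assert (0 < (q p p' + dl) * c) by (apply Rmult_lt_0_compat; lra). lra.
      + unfold D. eapply Nat.le_trans; [|apply (mxn_ge (fun p => mxn (f p) n) n p); lia].
        simpl. apply mxn_ge; lia.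
    - intros p p' p'' Hp Hp' Hp'' H1 H2 H3. rewrite !Hfm by auto.
      apply INR_le. rewrite plus_INR.
      destruct (FF p p' Hp Hp' H1) as [_ F1].
      destruct (FF p p'' Hp Hp'' H2) as [F2 _].
      destruct (FF p'' p' Hp'' Hp' (not_eq_sym H3)) as [F3 _].
      pose proof (Qt p p' p'' Hp Hp' Hp'').
      assert (q p p' * c <= q p p'' * c + q p'' p' * c).
      { rewrite <- Rmult_plus_distr_r. apply Rmult_le_compat_r; lra. }
      lra. }
  set (c0 := Enc.enc x).
  exists (fun k => Cantor.to_nat (c0, k)). split.
  - intros k s _ _ E. apply (f_equal Cantor.of_nat) in E.
    rewrite !Cantor.cancel_of_to in E. congruence.
  - intros k s Hk Hs. unfold rp, glue. rewrite !Cantor.cancel_of_to. simpl.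
    destruct (Nat.eq_dec c0 c0); [|congruence].
    unfold Wb, blk. unfold c0. rewrite Enc.decK.
    destruct (excluded_middle_informative (valid x)); [|contradiction]. simpl.
    unfold ext. destruct (Nat.eq_dec k s).
    + subst. rewrite Qd by auto. rewrite Rminus_diag, Rabs_R0. auto.
    + unfold xn; simpl. apply Nat.ltb_lt in Hk as Hk'. apply Nat.ltb_lt in Hs as Hs'.
      rewrite Hk', Hs'. simpl. unfold wfun. rewrite Hfm by auto.
      unfold xK; simpl. fold c.
      destruct (FF k s Hk Hs n0) as [F1 F2].
      assert (E1 : (q k s + dl) < INR (f k s) / c).
      { apply Rmult_lt_reg_r with c; auto. unfold Rdiv. rewrite Rmult_assoc, Rinv_l by lra. lra. }
      assert (E2 : INR (f k s) / c <= q k s + dl + / c).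
      { apply Rmult_le_reg_r with c; auto. unfold Rdiv.
        rewrite Rmult_assoc, Rinv_l by lra. rewrite Rmult_plus_distr_r, Rinv_l by lra. lra. }
      assert (E3 : / c < dl).
      { apply Rmult_lt_reg_r with c; auto. rewrite Rinv_l by lra. lra. }
      change (Rabs (INR (f k s) / c - q k s) < eps). apply Rabs_def1; unfold dl in *; lra.
Qed.

Lemma rr_weak : weakly_universal rr.
Proof.
  destruct rp_ok as [H1 H2]. destruct (pend_ok rp H1 H2) as [H3 H4].
  split; [exact H3|split; [exact H4|]].
  intros n q Hq eps Heps. destruct (rp_weak n q Hq eps Heps) as [idx [Hd Ha]].
  exists (fun k => S (idx k)). split.
  - intros k s Hk Hs E. apply (Hd k s Hk Hs). cbv beta in E. injection E. tauto.
  - intros k s Hk Hs. apply Ha; auto.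
Qed.

Theorem lemma5 :
  (forall r : mat, universal r -> weakly_universal r) /\
  (exists r : mat, weakly_universal r /\ ~ universal r).
Proof.
  split.
  - exact part1.
  - exists rr. split; [exact rr_weak|exact rr_not_universal].
Qed.
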